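(* Let $c\ge 0$, $n\in\mathbb{R}$ with $n>c$, and $\rho\in\mathbb{N}$. Define for $t\in[0,\infty)$ $$\omega_{n,j,\rho}(t)=\begin{cases}\displaystyle\int_t^\infty \mu_{n,1,\rho}(u)\,du, & j=0,\\[2mm] \displaystyle\int_0^t\big(\mu_{n,j,\rho}(u)-\mu_{n,j+1,\rho}(u)\big)\,du, & j\in\mathbb{N}.\end{cases}$$ Then for every $j\in\mathbb{N}_0$ and every $t\in[0,\infty)$, $$\omega_{n,j,\rho}(t)=\sum_{i=0}^{\rho-1}p_{n\rho+c,\,i+j\rho}(t).$$
   Context: Notation: for $c\in\mathbb{R}$, $a\in\mathbb{R}$ and $j\in\mathbb{N}$, $a^{c,\overline{j}}=\prod_{l=0}^{j-1}(a+cl)$ and $a^{c,\underline{j}}=\prod_{l=0}^{j-1}(a-cl)$, with $a^{c,\overline{0}}=a^{c,\underline{0}}=1$. Fix $c\ge0$. For real $m$ (with $m>0$) and $j\in\mathbb{N}_0$, $x\in[0,\infty)$, the basis functions are $p_{m,j}(x)=\frac{m^j}{j!}x^je^{-mx}$ if $c=0$, and $p_{m,j}(x)=\frac{m^{c,\overline{j}}}{j!}x^j(1+cx)^{-(\frac{m}{c}+j)}$ if $c>0$. For $n>c$, $\rho>0$, $j\in\mathbb{N}$, $t>0$: $\mu_{n,j,\rho}(t)=\frac{(n\rho)^{j\rho}}{\Gamma(j\rho)}t^{j\rho-1}e^{-n\rho t}$ if $c=0$, and $\mu_{n,j,\rho}(t)=\frac{c^{j\rho}}{B(j\rho,\frac{n}{c}\rho+1)}t^{j\rho-1}(1+ct)^{-(\frac{n}{c}+j)\rho-1}$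 if $c>0$, where $B(x,y)=\Gamma(x)\Gamma(y)/\Gamma(x+y)$ is Euler's Beta function. *)

(* Defs.v *)
From Stdlib Require Import Reals Lra ClassicalEpsilon Factorial.
Open Scope R_scope.

(* real power with convention for a zero/negative base: 0^0 = 1, 0^y = 0 otherwise *)
Definition rpow (x y : R) : R :=
  if Rlt_dec 0 x then Rpower x y
  else if Req_EM_T y 0 then 1 else 0.

Fixpoint rising (c a : R) (j : nat) : R :=
  match j with
  | O => 1
  | S k => rising c a k * (a + c * INR k)
  end.

(* Riemann integral value (0 if not Riemann integrable) *)
Definition RInt (f : R -> R) (a b : R) : R :=
  epsilon (inhabits 0) (fun v => exists pr : Riemann_integrable f a b, RiemannInt pr = v).

Definition improper_int_infty (f : R -> R) (a l : R) : Prop :=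
  (forall b, a <= b -> inhabited (Riemann_integrable f a b)) /\
  (forall eps, 0 < eps -> exists M, forall b, M <= b -> a <= b ->
      Rabs (RInt f a b - l) < eps).

(* Euler's Beta function B(x,y) = int_0^1 t^{x-1} (1-t)^{y-1} dt  (used for x,y >= 1) *)
Definition Beta (x y : R) : R :=
  RInt (fun t => rpow t (x - 1) * rpow (1 - t) (y - 1)) 0 1.

Definition p_basis (c m : R) (j : nat) (x : R) : R :=
  if Req_EM_T c 0 then m ^ j / INR (fact j) * x ^ j * exp (- m * x)
  else rising c m j / INR (fact j) * x ^ j * Rpower (1 + c * x) (- (m / c + INR j)).

(* mu_{n,j,rho}(t), with rho a positive natural number, so Gamma(j rho) = (j rho - 1)! *)
Definition mu (c n : R) (j rho : nat) (t : R) : R :=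
  let r := INR rho in
  if Req_EM_T c 0 then
    (n * r) ^ (j * rho) / INR (fact (j * rho - 1)) * t ^ (j * rho - 1) * exp (- n * r * t)
  else
    c ^ (j * rho) / Beta (INR (j * rho)) (n / c * r + 1) * t ^ (j * rho - 1)
      * Rpower (1 + c * t) (- ((n / c + INR j) * r) - 1).

(* omega_{n,j,rho}(t) = v  (including existence of the integrals) *)
Definition omega_is (c n : R) (j rho : nat) (t v : R) : Prop :=
  match j with
  | O => improper_int_infty (mu c n 1 rho) t v
  | S _ => inhabited (Riemann_integrable (fun u => mu c n j rho u - mu c n (S j) rho u) 0 t) /\
           RInt (fun u => mu c n j rho u - mu c n (S j) rho u) 0 t = v
  end.

(* Main.v *)
Require Import Defs.
From Stdlib Require Import Reals.
Open Scope R_scope.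
From Stdlib Require Import Lra Lia ClassicalEpsilon Factorial.
From Coquelicot Require Import Coquelicot.
Open Scope R_scope.


Lemma RInt_of_is (f : R -> R) a b v : is_RInt f a b v ->
  inhabited (Riemann_integrable f a b) /\ Defs.RInt f a b = v.
Proof.
  intros H.
  assert (pr : Riemann_integrable f a b) by (apply ex_RInt_Reals_0; exists v; exact H).
  split; [exact (inhabits pr)|].
  unfold Defs.RInt.
  destruct (epsilon_spec (inhabits 0) (fun v0 => exists pr : Riemann_integrable f a b, RiemannInt pr = v0)) as [pr' Hp].
  { exists (RiemannInt pr); exists pr; reflexivity. }
  rewrite <- Hp, <- RInt_Reals. now apply is_RInt_unique.
Qed.

Definition E (a t : R) := rpow (1 - t) a.

Lemma E_lt a t : t < 1 -> E a t = Rpower (1 - t) a.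
Proof. intros. unfold E, rpow. destruct (Rlt_dec 0 (1-t)); [auto|lra]. Qed.

Lemma E_ge a t : 1 <= t -> a <> 0 -> E a t = 0.
Proof. intros. unfold E, rpow. destruct (Rlt_dec 0 (1-t)); [lra|]. destruct (Req_EM_T a 0); [lra|auto]. Qed.

Lemma Rpower_small a eps : 0 < a -> 0 < eps -> forall x, 0 < x < exp (ln eps / a) -> Rpower x a < eps.
Proof.
  intros Ha He x Hx.
  apply Rlt_le_trans with (Rpower (exp (ln eps / a)) a).
  apply Rlt_Rpower_l; auto.
  unfold Rpower. rewrite ln_exp. right. replace (a * (ln eps / a)) with (ln eps) by (field; lra).
  now apply exp_ln.
Qed.

Lemma E_der a t : 0 < a -> t <= 1 -> is_derive (E (a+1)) t (-(a+1) * E a t).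
Proof.
  intros Ha Ht. destruct Ht as [Ht|Ht].
  - rewrite E_lt by auto.
    apply is_derive_ext_loc with (fun t => exp ((a+1) * ln (1 - t))).
    { exists (mkposreal (1 - t) ltac:(lra)). intros y Hy. rewrite E_lt. reflexivity.
      unfold ball in Hy; simpl in Hy; unfold AbsRing_ball, abs, minus, plus, opp in Hy; simpl in Hy.
      apply Rabs_lt_between in Hy. lra. }
    auto_derive. lra.
    unfold Rpower. replace (1 + - t) with (1 - t) by ring. replace ((a+1) * ln (1-t)) with (a * ln (1-t) + ln (1-t)) by ring.
    rewrite exp_plus, exp_ln by lra. field. lra.
  - subst t. rewrite (E_ge a 1) by lra. apply is_derive_Reals.
    intros eps Heps. exists (mkposreal (exp (ln eps / a)) (exp_pos _)). intros h Hh Hh2. simpl in Hh2.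
    rewrite (E_ge _ 1) by lra.
    destruct (Rlt_or_le h 0) as [Hn|Hp].
    + rewrite E_lt by lra. replace (1 - (1 + h)) with (-h) by ring.
      rewrite Rpower_plus, Rpower_1 by lra.
      replace ((Rpower (- h) a * - h - 0) / h - - (a + 1) * 0) with (- Rpower (-h) a) by (field; lra).
      rewrite Rabs_Ropp, Rabs_pos_eq by (unfold Rpower; left; apply exp_pos).
      apply Rpower_small; auto. rewrite Rabs_left in Hh2 by lra. lra.
    + rewrite E_ge by lra. replace ((0 - 0) / h - - (a + 1) * 0) with 0 by (field; lra).
      rewrite Rabs_R0; lra.
Qed.

Lemma E_cont a t : 0 < a -> t <= 1 -> continuous (E a) t.
Proof.
  intros Ha Ht. destruct Ht as [Ht|Ht].
  - apply continuous_ext_loc with (fun t => exp (a * ln (1 - t))).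
    { exists (mkposreal (1 - t) ltac:(lra)). intros y Hy. rewrite E_lt. reflexivity.
      unfold ball in Hy; simpl in Hy; unfold AbsRing_ball, abs, minus, plus, opp in Hy; simpl in Hy.
      apply Rabs_lt_between in Hy. lra. }
    apply (@ex_derive_continuous R_AbsRing R_NormedModule). auto_derive. lra.
  - subst t. apply continuity_pt_filterlim. intros eps Heps.
    exists (exp (ln eps / a)). split; [apply exp_pos|]. intros x [_ Hx].
    simpl in *. unfold R_dist in *. rewrite (E_ge a 1) by lra.
    destruct (Rlt_or_le x 1) as [Hn|Hp].
    + rewrite E_lt by lra. rewrite Rminus_0_r, Rabs_pos_eq by (unfold Rpower; left; apply exp_pos).
      apply Rpower_small; auto. rewrite Rabs_left in Hx by lra. lra.
    + rewrite E_ge by lra. rewrite Rminus_0_r, Rabs_R0; lra.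
Qed.

Lemma cmul (f g : R -> R) x : continuous f x -> continuous g x -> continuous (fun y => f y * g y) x.
Proof. intros. exact (@continuous_mult R_UniformSpace R_AbsRing f g x H H0). Qed.
Lemma cminus (f g : R -> R) x : continuous f x -> continuous g x -> continuous (fun y => f y - g y) x.
Proof. intros. exact (@continuous_minus R_UniformSpace R_AbsRing R_NormedModule f g x H H0). Qed.
Lemma cconst (k x : R) : continuous (fun _ => k) x.
Proof. exact (@continuous_const R_UniformSpace R_UniformSpace k x). Qed.
Lemma cpow (k : nat) x : continuous (fun y => y ^ k) x.
Proof. apply (@ex_derive_continuous R_AbsRing R_NormedModule). auto_derive. auto. Qed.

Lemma dmul (f g : R -> R) x df dg : is_derive f x df -> is_derive g x dg ->
  is_derive (fun y => f y * g y) x (df * g x + f x * dg).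
Proof. intros. exact (@is_derive_mult R_AbsRing f g x df dg H H0 Rmult_comm). Qed.
Lemma dminus (f g : R -> R) x df dg : is_derive f x df -> is_derive g x dg ->
  is_derive (fun y => f y - g y) x (df - dg).
Proof. intros. exact (@is_derive_minus R_AbsRing R_NormedModule f g x df dg H H0). Qed.
Lemma dplus (f g : R -> R) x df dg : is_derive f x df -> is_derive g x dg ->
  is_derive (fun y => f y + g y) x (df + dg).
Proof. intros. exact (@is_derive_plus R_AbsRing R_NormedModule f g x df dg H H0). Qed.
Lemma dval (f : R -> R) x d d' : is_derive f x d -> d = d' -> is_derive f x d'.
Proof. intros; subst; auto. Qed.

Lemma ilin (f g : R -> R) a b If Ig al be : is_RInt f a b If -> is_RInt g a b Ig ->
  is_RInt (fun x => al * f x + be * g x) a b (al * If + be * Ig).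
Proof.
  intros. apply (@is_RInt_plus R_NormedModule); apply (@is_RInt_scal R_NormedModule); auto.
Qed.
Lemma ival (f : R -> R) a b v v' : is_RInt f a b v -> v = v' -> is_RInt f a b v'.
Proof. intros; subst; auto. Qed.
Lemma iext (f g : R -> R) a b v : is_RInt f a b v -> (forall x, Rmin a b < x < Rmax a b -> f x = g x) -> is_RInt g a b v.
Proof. intros. eapply is_RInt_ext; eauto. Qed.
Lemma ftc (f df : R -> R) a b : (forall x, Rmin a b <= x <= Rmax a b -> is_derive f x (df x)) ->
  (forall x, Rmin a b <= x <= Rmax a b -> continuous df x) -> is_RInt df a b (f b - f a).
Proof. intros. exact (@is_RInt_derive R_CompleteNormedModule f df a b H H0). Qed.

Lemma rising_S c a k : rising c a (S k) = a * rising c (a + c) k.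
Proof.
  revert a. induction k; intros a; simpl. ring.
  simpl in IHk. rewrite IHk. destruct k; simpl; ring.
Qed.

Lemma rising_pos c b k : 0 <= c -> 0 < b -> 0 < rising c b k.
Proof.
  intros Hc Hb. induction k; simpl. lra.
  apply Rmult_lt_0_compat; auto. pose proof (pos_INR k). nra.
Qed.

Lemma E0 a : E a 0 = 1.
Proof. rewrite E_lt by lra. unfold Rpower. replace (1-0) with 1 by ring. rewrite ln_1, Rmult_0_r. apply exp_0. Qed.

Lemma Ik k : forall a, 0 < a -> is_RInt (fun t => t^k * E a t) 0 1 (INR (fact k) / rising 1 (a+1) (S k)).
Proof.
  induction k; intros a Ha.
  - eapply ival.
    + apply (ftc (fun t => - / (a+1) * E (a+1) t)).
      * intros x Hx. rewrite Rmin_left, Rmax_right in Hx by lra.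
        eapply dval. apply (@is_derive_scal). apply E_der; lra. simpl. field. lra.
      * intros x Hx. rewrite Rmin_left, Rmax_right in Hx by lra.
        apply cmul. apply cconst. apply E_cont; lra.
    + rewrite E0, E_ge by lra. simpl. field. lra.
  - eapply ival.
    + eapply iext.
      eapply (ilin _ _ 0 1 _ _ (INR (S k) / (a+1)) (- / (a+1))). apply (IHk (a+1)); lra.
      apply (ftc (fun t => t^(S k) * E (a+1) t) (fun t => INR (S k) * t^k * E (a+1) t - (a+1) * (t^(S k) * E a t))).
      * intros x Hx. rewrite Rmin_left, Rmax_right in Hx by lra.
        eapply dval. apply dmul. apply is_derive_pow. apply is_derive_id. apply E_der; lra.
        simpl. unfold one. simpl. ring.
      * intros x Hx. rewrite Rmin_left, Rmax_right in Hx by lra.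
        apply cminus. apply cmul. apply cmul. apply cconst. apply cpow. apply E_cont; lra.
        apply cmul. apply cconst. apply cmul. apply cpow. apply E_cont; lra.
      * intros x Hx. simpl. field. lra.
    + rewrite E0, E_ge by lra. rewrite (rising_S 1 (a+1) (S k)).
      replace (a + 1 + 1) with (a + 1 + 1) by ring.
      change (fact (S k)) with (S k * fact k)%nat. rewrite mult_INR.
      simpl pow. rewrite !Rmult_0_l.
      assert (0 < rising 1 (a + 1 + 1) (S k)).
      { apply rising_pos; lra. }
      match goal with |- ?x = ?y => change (@eq R x y) end. field. split; lra.
Qed.


Ltac req := match goal with |- @eq _ ?x ?y => change (@eq R x y) end.

Lemma Beta_val K y : (1 <= K)%nat -> 1 < y -> Beta (INR K) y = INR (fact (K-1)) / rising 1 y K.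
Proof.
  intros HK Hy. unfold Beta.
  apply RInt_of_is.
  eapply iext. eapply ival. apply (Ik (K-1) (y-1)). lra.
  replace (y - 1 + 1) with y by ring. replace (S (K-1)) with K by lia. reflexivity.
  intros x Hx. rewrite Rmin_left, Rmax_right in Hx by lra.
  unfold E. f_equal. unfold rpow. destruct (Rlt_dec 0 x); [|lra].
  replace (INR K - 1) with (INR (K-1)) by (rewrite minus_INR by lia; simpl; ring).
  now rewrite Rpower_pow.
Qed.

Lemma dRp c e x : 0 < 1 + c * x -> is_derive (fun t => Rpower (1 + c*t) e) x (e * c * Rpower (1 + c*x) (e-1)).
Proof.
  intros H. unfold Rpower. auto_derive. auto.
  replace (e * ln (1 + c*x)) with ((e-1) * ln (1+c*x) + ln (1+c*x)) by ring.
  rewrite exp_plus, exp_ln by auto. field. lra.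
Qed.

Lemma dterm A k e c x : 0 < 1 + c*x -> is_derive (fun t => A * t^k * Rpower (1+c*t) e) x
  (A * INR k * x^(pred k) * Rpower (1+c*x) e + A * x^k * (e*c*Rpower (1+c*x) (e-1))).
Proof.
  intros H. eapply dval. apply (dmul (fun t => A * t^k) (fun t => Rpower (1+c*t) e) x (A * INR k * x^(pred k))).
  2: apply dRp; auto. auto_derive. auto. req; ring. req; ring.
Qed.

Lemma dterm0 A k m x : is_derive (fun t => A * t^k * exp (-m*t)) x
  (A * INR k * x^(pred k) * exp (-m*x) - A * x^k * m * exp (-m*x)).
Proof. auto_derive. auto. ring. Qed.

Definition Q c m k t := if Req_EM_T c 0 then m^(S k)/INR (fact k) * t^k * exp (-m*t)
  else rising c m (S k)/INR (fact k) * t^k * Rpower (1+c*t) (-(m/c + INR k + 1)).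

Lemma fact_S_INR k : INR (fact (S k)) = INR (S k) * INR (fact k).
Proof. change (fact (S k)) with (S k * fact k)%nat. apply mult_INR. Qed.

Lemma dPS c m k x : 0 < 1 + c*x -> is_derive (p_basis c m (S k)) x (Q c m k x - Q c m (S k) x).
Proof.
  intros Hx. unfold Q. pose proof (INR_fact_neq_0 k) as Hf. pose proof (S_INR k) as HS.
  pose proof (pos_INR k).
  destruct (Req_EM_T c 0) as [Hc|Hc].
  - eapply is_derive_ext with (f := fun t => m^(S k)/INR (fact (S k)) * t^(S k) * exp (-m*t)).
    { intros t. unfold p_basis. destruct (Req_EM_T c 0); [reflexivity|contradiction]. }
    eapply dval. apply dterm0. rewrite !fact_S_INR. simpl pred. simpl pow. req; field. lra.
  - eapply is_derive_ext with (f := fun t => rising c m (S k)/INR (fact (S k)) * t^(S k) * Rpower (1+c*t) (-(m/c + INR (S k)))).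
    { intros t. unfold p_basis. destruct (Req_EM_T c 0); [contradiction|reflexivity]. }
    eapply dval. apply dterm; auto.
    replace (-(m/c + INR k + 1)) with (-(m/c + INR (S k))) by lra.
    replace (-(m/c + INR (S k)) - 1) with (-(m/c + INR (S k) + 1)) by ring.
    rewrite !fact_S_INR. change (rising c m (S (S k))) with (rising c m (S k) * (m + c * INR (S k))).
    simpl pred. simpl pow. req; field. lra.
Qed.

Lemma dP0 c m x : 0 < 1 + c*x -> is_derive (p_basis c m 0) x (- Q c m 0 x).
Proof.
  intros Hx. unfold Q.
  destruct (Req_EM_T c 0) as [Hc|Hc].
  - eapply is_derive_ext with (f := fun t => m^0/INR (fact 0) * t^0 * exp (-m*t)).
    { intros t. unfold p_basis. destruct (Req_EM_T c 0); [reflexivity|contradiction]. }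
    eapply dval. apply dterm0. simpl. req; field.
  - eapply is_derive_ext with (f := fun t => rising c m 0/INR (fact 0) * t^0 * Rpower (1+c*t) (-(m/c + INR 0))).
    { intros t. unfold p_basis. destruct (Req_EM_T c 0); [contradiction|reflexivity]. }
    eapply dval. apply dterm; auto.
    replace (-(m/c + INR 0) - 1) with (-(m/c + INR 0 + 1)) by ring.
    simpl. req; field. auto.
Qed.

Definition tends0 (f : R -> R) := forall eps, 0 < eps -> exists M, forall b, M <= b -> Rabs (f b) < eps.

Lemma exp_pow_n n x : exp (INR n * x) = exp x ^ n.
Proof.
  induction n. simpl. rewrite Rmult_0_l. apply exp_0.
  rewrite S_INR. replace ((INR n + 1) * x) with (INR n * x + x) by ring.
  rewrite exp_plus, IHn. simpl. ring.
Qed.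

Lemma tends0_p0 m k : 0 < m -> tends0 (fun b => m^k / INR (fact k) * b^k * exp (-m*b)).
Proof.
  intros Hm eps He.
  set (A := m^k / INR (fact k)).
  assert (HA : 0 < A). { unfold A. apply Rdiv_lt_0_compat. apply pow_lt; auto. apply lt_0_INR, lt_O_fact. }
  set (al := (m / INR (S k)) ^ (S k)).
  assert (Hal : 0 < al). { unfold al. apply pow_lt. apply Rdiv_lt_0_compat; auto. apply lt_0_INR; lia. }
  exists (A / (eps * al) + 1). intros b Hb. cbv beta.
  assert (Hb0 : 0 < b). { assert (0 < A / (eps*al)) by (apply Rdiv_lt_0_compat; nra). lra. }
  assert (HD : al * b^(S k) <= exp (m*b)).
  { replace (m*b) with (INR (S k) * (m*b/INR (S k))) by (field; apply not_0_INR; lia).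
    rewrite exp_pow_n. unfold al. rewrite <- Rpow_mult_distr.
    apply pow_incr. split. apply Rmult_le_pos. left. apply Rdiv_lt_0_compat; auto. apply lt_0_INR; lia. lra.
    pose proof (exp_ineq1_le (m * b / INR (S k))). replace (m / INR (S k) * b) with (m * b / INR (S k)) by (field; apply not_0_INR; lia). lra. }
  assert (Hpos : 0 < b^k) by (apply pow_lt; auto).
  rewrite Rabs_pos_eq. 2: { apply Rmult_le_pos. fold A. nra. left; apply exp_pos. }
  fold A. replace (-m*b) with (-(m*b)) by ring. rewrite exp_Ropp.
  apply Rle_lt_trans with (A * b^k / (al * b^(S k))).
  { unfold Rdiv. apply Rmult_le_compat_l. nra. apply Rinv_le_contravar; auto.
    apply Rmult_lt_0_compat; auto. apply pow_lt; auto. }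
  replace (A * b^k / (al * b^(S k))) with (A / (al * b)) by (simpl; field; repeat split; lra).
  apply Rlt_div_l. nra.
  assert (A / (eps * al) < b) by lra.
  apply Rlt_div_l in H. 2: nra. nra.
Qed.

Lemma tends0_pc c m k : 0 < c -> 0 < m ->
  tends0 (fun b => rising c m k / INR (fact k) * b^k * Rpower (1 + c*b) (-(m/c + INR k))).
Proof.
  intros Hc Hm eps He.
  set (A := rising c m k / INR (fact k)).
  assert (HA : 0 < A). { unfold A. apply Rdiv_lt_0_compat. apply rising_pos; lra. apply lt_0_INR, lt_O_fact. }
  set (s := m / c). assert (Hs : 0 < s) by (unfold s; apply Rdiv_lt_0_compat; auto).
  set (T := A / c^k / eps).
  assert (HT : 0 < T) by (unfold T; apply Rdiv_lt_0_compat; auto; apply Rdiv_lt_0_compat; auto; apply pow_lt; auto).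
  exists (exp (T/s) / c). intros b Hb. cbv beta.
  assert (Hb0 : 0 < b). { assert (0 < exp (T/s) / c) by (apply Rdiv_lt_0_compat; auto; apply exp_pos). lra. }
  set (X := 1 + c*b). assert (HX : 0 < X) by (unfold X; nra).
  assert (HRX : T < Rpower X s).
  { assert (exp (T/s) < X). { unfold X. apply Rmult_le_compat_l with (r := c) in Hb; [|lra].
      replace (c * (exp (T/s) / c)) with (exp (T/s)) in Hb by (field; lra). lra. }
    assert (T/s < ln X). { rewrite <- (ln_exp (T/s)). apply ln_increasing; auto. apply exp_pos. }
    unfold Rpower. pose proof (exp_ineq1_le (s * ln X)).
    assert (T < s * ln X). { apply Rmult_lt_compat_l with (r := s) in H0; auto. replace (s * (T/s)) with T in H0 by (field; lra). auto. }
    lra. }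
  assert (Hsplit : Rpower X (-(s + INR k)) = / Rpower X s * / X^k).
  { rewrite Rpower_Ropp, Rpower_plus, Rpower_pow by auto. rewrite Rinv_mult. reflexivity. }
  rewrite Hsplit.
  assert (HRp : 0 < Rpower X s) by (unfold Rpower; apply exp_pos).
  assert (HXk : 0 < X^k) by (apply pow_lt; auto).
  assert (Hbk : b^k <= (X/c)^k). { apply pow_incr. split. lra. unfold X. apply Rmult_le_reg_l with c; auto.
      replace (c * ((1 + c*b)/c)) with (1 + c*b) by (field; lra). lra. }
  assert (Hbk0 : 0 <= b^k) by (apply pow_le; lra).
  rewrite Rabs_pos_eq.
  2: { apply Rmult_le_pos. apply Rmult_le_pos; lra. apply Rmult_le_pos; left; apply Rinv_0_lt_compat; auto. }
  fold A.
  apply Rle_lt_trans with (A * (X/c)^k * (/ Rpower X s * / X ^ k)).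
  { apply Rmult_le_compat_r. apply Rmult_le_pos; left; apply Rinv_0_lt_compat; auto.
    apply Rmult_le_compat_l; lra. }
  replace (A * (X/c)^k * (/ Rpower X s * / X ^ k)) with (A / c^k / Rpower X s)
    by (unfold Rdiv; rewrite Rpow_mult_distr, pow_inv; field; repeat split; try lra; apply pow_nonzero; lra).
  apply Rlt_div_l; auto.
  unfold T in HRX. apply Rlt_div_l in HRX; auto. lra.
Qed.

Lemma tends0_p c m k : 0 <= c -> 0 < m -> tends0 (p_basis c m k).
Proof.
  intros Hc Hm. unfold p_basis. destruct (Req_EM_T c 0).
  - apply tends0_p0; auto.
  - apply tends0_pc; auto. lra.
Qed.

Lemma tends0_sum c m K N : 0 <= c -> 0 < m ->
  tends0 (fun b => sum_f_R0 (fun i => p_basis c m (i + K) b) N).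
Proof.
  intros Hc Hm. induction N.
  - simpl. apply tends0_p; auto.
  - intros eps He. destruct (IHN (eps/2) ltac:(lra)) as [M1 H1].
    destruct (tends0_p c m (S N + K) Hc Hm (eps/2) ltac:(lra)) as [M2 H2].
    exists (Rmax M1 M2). intros b Hb. simpl.
    eapply Rle_lt_trans. apply Rabs_triang.
    specialize (H1 b ltac:(pose proof (Rmax_l M1 M2); lra)).
    specialize (H2 b ltac:(pose proof (Rmax_r M1 M2); lra)). simpl in H2. lra.
Qed.

Lemma Q_cont c m k x : 0 < 1 + c*x -> continuous (Q c m k) x.
Proof.
  intros H. unfold Q. destruct (Req_EM_T c 0); apply (@ex_derive_continuous R_AbsRing R_NormedModule).
  - auto_derive. auto.
  - unfold Rpower. auto_derive. auto.
Qed.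

Lemma rising_scale c a k : c <> 0 -> rising c a k = c^k * rising 1 (a/c) k.
Proof.
  intros Hc. induction k; simpl. ring. rewrite IHk. field. auto.
Qed.

Lemma mu_Q c n rho j t : 0 <= c -> c < n -> (1 <= rho)%nat -> (1 <= j)%nat ->
  mu c n j rho t = Q c (n * INR rho + c) (j*rho - 1) t.
Proof.
  intros Hc Hn Hr Hj. assert (Hrho : 1 <= INR rho) by (apply (le_INR 1); auto).
  assert (HK : (1 <= j * rho)%nat) by nia.
  unfold mu, Q. cbv zeta.
  replace (S (j * rho - 1)) with (j * rho)%nat by lia.
  destruct (Req_EM_T c 0) as [H0|H0].
  - subst c. rewrite Rplus_0_r. f_equal. f_equal. ring.
  - assert (Hcp : 0 < c) by lra.
    rewrite Beta_val; auto.
    2: { assert (0 < n / c * INR rho) by (apply Rmult_lt_0_compat; [apply Rdiv_lt_0_compat|]; lra). lra. }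
    rewrite (rising_scale c _ (j*rho)) by auto.
    replace ((n * INR rho + c) / c) with (n / c * INR rho + 1) by (field; auto).
    replace (- ((n / c + INR j) * INR rho) - 1) with (- (n / c * INR rho + 1 + INR (j * rho - 1) + 1)).
    2: { rewrite minus_INR by auto. rewrite mult_INR. simpl. field. auto. }
    assert (0 < rising 1 (n / c * INR rho + 1) (j * rho)).
    { apply rising_pos. lra. assert (0 < n / c * INR rho) by (apply Rmult_lt_0_compat; [apply Rdiv_lt_0_compat|]; lra). lra. }
    pose proof (INR_fact_neq_0 (j * rho - 1)).
    field. repeat split; auto; lra.
Qed.

Lemma p_at0 c m k : (1 <= k)%nat -> p_basis c m k 0 = 0.
Proof. intros. unfold p_basis. rewrite pow_i by lia. destruct Req_EM_T; ring. Qed.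

Lemma sum_at0 c m K N : (1 <= K)%nat -> sum_f_R0 (fun i => p_basis c m (i + K) 0) N = 0.
Proof.
  intros HK. induction N; simpl. apply p_at0; lia. rewrite IHN, p_at0 by lia. ring.
Qed.

Lemma dsum c m K N x : (1 <= K)%nat -> 0 < 1 + c*x ->
  is_derive (fun t => sum_f_R0 (fun i => p_basis c m (i + K) t) N) x (Q c m (K-1) x - Q c m (N+K) x).
Proof.
  intros HK Hx. induction N.
  - simpl. destruct K as [|K']. lia. replace (S K' - 1)%nat with K' by lia. apply dPS; auto.
  - eapply is_derive_ext with (f := fun t => sum_f_R0 (fun i => p_basis c m (i + K) t) N + p_basis c m (S N + K) t).
    { intros; reflexivity. }
    eapply dval. apply dplus. apply IHN. apply (dPS c m (N + K) x); auto. change (S N + K)%nat with (S (N + K)). req; ring.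
Qed.

Lemma dsum0 c m N x : 0 < 1 + c*x ->
  is_derive (fun t => sum_f_R0 (fun i => p_basis c m (i + 0) t) N) x (- Q c m N x).
Proof.
  intros Hx. induction N.
  - simpl. apply dP0; auto.
  - eapply is_derive_ext with (f := fun t => sum_f_R0 (fun i => p_basis c m (i + 0) t) N + p_basis c m (S N + 0) t).
    { intros; reflexivity. }
    eapply dval. apply dplus. apply IHN. replace (S N + 0)%nat with (S N) by lia. apply dPS; auto.
    replace (N + 0)%nat with N by lia. req; ring.
Qed.

Lemma dopp (f : R -> R) x d : is_derive f x d -> is_derive (fun y => - f y) x (- d).
Proof. intros. exact (@is_derive_opp R_AbsRing R_NormedModule f x d H). Qed.

Theorem lemma1 (c n : R) (rho : nat) (hc : 0 <= c) (hn : c < n) (hrho : (1 <= rho)%nat) :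
  forall (j : nat) (t : R), 0 <= t ->
    omega_is c n j rho t
      (sum_f_R0 (fun i => p_basis c (n * INR rho + c) (i + j * rho) t) (rho - 1)).
Proof.
  intros j t Ht.
  assert (Hrho : 1 <= INR rho) by (apply (le_INR 1); auto).
  set (m := n * INR rho + c).
  assert (Hm : 0 < m) by (unfold m; nra).
  destruct j as [|j'].
  - change (0 * rho)%nat with 0%nat.
    set (S0 := fun x => sum_f_R0 (fun i => p_basis c m (i + 0) x) (rho - 1)).
    change (improper_int_infty (mu c n 1 rho) t (S0 t)).
    assert (HI : forall b, t <= b -> is_RInt (mu c n 1 rho) t b (S0 t - S0 b)).
    { intros b Hb. eapply iext. eapply ival.
      apply (ftc (fun x => - S0 x) (Q c m (rho - 1))).
      - intros x Hx. rewrite Rmin_left, Rmax_right in Hx by lra.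
        eapply dval. apply dopp. apply dsum0. nra. req; ring.
      - intros x Hx. rewrite Rmin_left, Rmax_right in Hx by lra. apply Q_cont. nra.
      - req; ring.
      - intros x _. rewrite (mu_Q c n rho 1 x) by (auto; lia). fold m. f_equal. lia. }
    split.
    + intros b Hb. apply (RInt_of_is _ _ _ _ (HI b Hb)).
    + intros eps He. destruct (tends0_sum c m 0 (rho - 1) hc Hm eps He) as [M HM].
      exists M. intros b HMb Hb. rewrite (proj2 (RInt_of_is _ _ _ _ (HI b Hb))).
      replace (S0 t - S0 b - S0 t) with (- S0 b) by ring. rewrite Rabs_Ropp. apply HM; auto.
  - set (K := (S j' * rho)%nat). assert (HK : (1 <= K)%nat) by (unfold K; nia).
    set (S0 := fun x => sum_f_R0 (fun i => p_basis c m (i + K) x) (rho - 1)).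
    change (omega_is c n (S j') rho t (S0 t)).
    simpl omega_is. apply RInt_of_is.
    eapply iext. eapply ival.
    apply (ftc S0 (fun x => Q c m (K - 1) x - Q c m (rho - 1 + K) x)).
    + intros x Hx. rewrite Rmin_left, Rmax_right in Hx by lra. apply dsum; auto. nra.
    + intros x Hx. rewrite Rmin_left, Rmax_right in Hx by lra. apply cminus; apply Q_cont; nra.
    + unfold S0. rewrite sum_at0 by auto. req; ring.
    + intros x _. rewrite !(mu_Q c n rho _ x) by (auto; lia). fold m. unfold K. f_equal; f_equal; lia.
Qed.
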